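(* Let $f:\mathbb{T}\to\mathbb{R}$ and $\nu\ge0$. For all $t\in\mathbb{T}^\kappa$, $$({}_h\Delta_{\rho(b)}^{-\nu}f^{\Delta})(t-\nu h)=\frac{\nu}{\Gamma(\nu+1)}(b+\nu h-\sigma(t))_h^{(\nu-1)}f(b)+\bigl[\tau\mapsto({}_h\Delta_b^{-\nu}f)(\tau-\nu h)\bigr]^{\Delta}(t),$$ where on the left the right fractional $h$-sum with upper endpoint $\rho(b)=b-h$ is applied to $f^\Delta$ (a function on $\mathbb{T}^\kappa$).
   Context: Let $a\in\mathbb{R}$, $h>0$, $b=a+kh$ with $k\in\mathbb{N}$, $\mathbb{T}=\{a,a+h,\dots,b\}$, $\mathbb{T}^\kappa=\mathbb{T}\setminus\{b\}$, $\sigma(t)=t+h$, $\rho(t)=t-h$, $g^\Delta(t)=(g(t+h)-g(t))/h$. For $c\le d$ in $\{a+jh:j\in\mathbb{Z}\}$, $\int_c^dg(s)\Delta s:=h\sum_{j=0}^{(d-c)/h-1}g(c+jh)$. $h$-factorial: $x_h^{(y)}:=h^y\Gamma(\frac{x}{h}+1)/\Gamma(\frac{x}{h}+1-y)$ (division at a pole yields zero). For $\nu\ge0$, $c\in\mathbb{T}$ and $g$ defined on $\{s\in\mathbb{T}:s\le c\}$, the right fractional $h$-sum with upper endpoint $c$ (written at the shifted point) is, for $t\in\mathbb{T}$, $t\le c$: $({}_h\Delta_c^{-\nu}g)(t-\nu h):=h^\nu g(t)+\frac{\nu}{\Gamma(\nu+1)}\int_{\sigma(t)}^{\sigma(c)}(s+\nu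 h-\sigma(t))_h^{(\nu-1)}g(s)\Delta s.$ *)

(* Defs.v *)
From Stdlib Require Import Reals Lra ClassicalEpsilon Arith Factorial.
Open Scope R_scope.

Fixpoint sumR (n : nat) (g : nat -> R) : R :=
  match n with O => 0 | S m => sumR m g + g m end.

Fixpoint prodR (n : nat) (g : nat -> R) : R :=
  match n with O => 1 | S m => prodR m g * g m end.

(* Gauss' product for the reciprocal Gamma function (entire):
   1/Gamma(z) = lim_n z(z+1)...(z+n) / (n! (n+1)^z). *)
Definition rGamma_seq (z : R) (n : nat) : R :=
  prodR (S n) (fun i => z + INR i) / (INR (fact n) * Rpower (INR (S n)) z).

(* reciprocal Gamma: the limit of the Gauss product (it always exists) *)
Definition rGamma (z : R) : R :=
  epsilon (inhabits 0) (fun l => Un_cv (rGamma_seq z) l).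

(* Euler Gamma function (the value at poles, where rGamma = 0, is irrelevant) *)
Definition Gamma (z : R) : R := / rGamma z.

(* h-factorial x_h^(y) = h^y Gamma(x/h+1)/Gamma(x/h+1-y); division by Gamma at a
   pole is encoded as multiplication by 1/Gamma = rGamma = 0, i.e. yields 0. *)
Definition hfact (h x y : R) : R :=
  Rpower h y * Gamma (x / h + 1) * rGamma (x / h + 1 - y).

(* points of the time scale a + j h *)
Definition tpt (a h : R) (j : nat) : R := a + INR j * h.

(* delta integral from c to c + n h : h * sum_{i=0}^{n-1} g (c + i h) *)
Definition dint (h c : R) (n : nat) (g : R -> R) : R :=
  h * sumR n (fun i => g (c + INR i * h)).

Definition hdelta (h : R) (g : R -> R) (t : R) : R := (g (t + h) - g t) / h.

(* right fractional h-sum with upper endpoint c = a + jc h, evaluated at the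
   shifted point t - nu h where t = a + jt h (jt <= jc):
   h^nu g(t) + nu/Gamma(nu+1) * int_{sigma t}^{sigma c} (s + nu h - sigma t)_h^(nu-1) g(s) Delta s *)
Definition frac_sum (h nu a : R) (jc : nat) (g : R -> R) (jt : nat) : R :=
  let t := tpt a h jt in
  Rpower h nu * g t
  + nu / Gamma (nu + 1)
    * dint h (t + h) (jc - jt) (fun s => hfact h (s + nu * h - (t + h)) (nu - 1) * g s).

(* Main.v *)
Require Import Defs.
From Stdlib Require Import Reals Lra Lia.
Open Scope R_scope.

Lemma sumR_ext n (u v : nat -> R) : (forall i, u i = v i) -> sumR n u = sumR n v.
Proof. intros H; induction n; simpl; [reflexivity| rewrite IHn, H; reflexivity]. Qed.

Lemma telesc (h : R) (hh : h <> 0) (w g : nat -> R) n :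
  sumR n (fun i => w i * ((g (S i) - g i) / h)) * h
  = sumR n (fun i => w i * g (S i)) - sumR (S n) (fun i => w i * g i) + w n * g n.
Proof.
  induction n; simpl.
  - ring.
  - simpl in IHn. rewrite Rmult_plus_distr_r, IHn. field. exact hh.
Qed.

Theorem mainTheorem8 (a h nu : R) (k : nat) (f : R -> R)
  (hh : 0 < h) (hnu : 0 <= nu) (j : nat) (hj : (j < k)%nat) :
  let b := tpt a h k in
  let t := tpt a h j in
  frac_sum h nu a (k - 1) (hdelta h f) j
  = nu / Gamma (nu + 1) * hfact h (b + nu * h - (t + h)) (nu - 1) * f b
    + (frac_sum h nu a k f (S j) - frac_sum h nu a k f j) / h.
Proof.
  intros b t. subst b t.
  assert (Hk : exists n, k = (j + S n)%nat) by (exists (k - j - 1)%nat; lia).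
  destruct Hk as [n ->].
  set (w := fun i : nat => hfact h (INR i * h + nu * h) (nu - 1)).
  set (g := fun i : nat => f (a + INR j * h + h + INR i * h)).
  unfold frac_sum, dint, tpt, hdelta.
  replace (j + S n - 1 - j)%nat with n by lia.
  replace (j + S n - j)%nat with (S n) by lia.
  replace (j + S n - S j)%nat with n by lia.
  assert (hh0 : h <> 0) by lra.
  rewrite (sumR_ext n _ (fun i => w i * ((g (S i) - g i) / h))).
  2:{ intro i. unfold w, g. rewrite S_INR. f_equal; [f_equal; ring|].
      f_equal. f_equal; f_equal; ring. }
  rewrite (sumR_ext n (fun i => hfact h (a + INR (S j) * h + h + INR i * h + nu * h - (a + INR (S j) * h + h)) (nu - 1) *
     f (a + INR (S j) * h + h + INR i * h)) (fun i => w i * g (S i))).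
  2:{ intro i. unfold w, g. rewrite !S_INR. f_equal; [f_equal; ring| f_equal; ring]. }
  rewrite (sumR_ext (S n) (fun i => hfact h (a + INR j * h + h + INR i * h + nu * h - (a + INR j * h + h)) (nu - 1) *
     f (a + INR j * h + h + INR i * h)) (fun i => w i * g i)).
  2:{ intro i. unfold w, g. f_equal; f_equal; ring. }
  replace (f (a + INR (S j) * h)) with (g 0%nat) by (unfold g; rewrite S_INR; change (INR 0) with 0; f_equal; ring).
  replace (f (a + INR (j + S n) * h)) with (g n) by (unfold g; rewrite plus_INR, S_INR; f_equal; ring).
  replace (hfact h (a + INR (j + S n) * h + nu * h - (a + INR j * h + h)) (nu - 1)) with (w n)
    by (unfold w; rewrite plus_INR, S_INR; f_equal; ring).
  replace (f (a + INR j * h + h)) with (g 0%nat) by (unfold g; change (INR 0) with 0; f_equal; ring).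
  pose proof (telesc h hh0 w g n) as T.
  set (A := sumR n (fun i => w i * ((g (S i) - g i) / h))) in *.
  replace A with ((sumR n (fun i : nat => w i * g (S i)) - sumR (S n) (fun i : nat => w i * g i) + w n * g n) / h)
    by (rewrite <- T; field; exact hh0).
  set (c := nu / Gamma (nu + 1)).
  field. exact hh0.
Qed.
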